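(* Let $\mathcal{V}$ be a variety and let $F,G$ be global operators on $\mathcal{V}$ for admissible and reflexive relations which are monotone and satisfy the homomorphism property. Then the following are equivalent: (i) There is a ternary term $t$ of $\mathcal{V}$ which is Mal'cev modulo $F_{\mathbf{A}}$ and $G_{\mathbf{A}}$ for every algebra $\mathbf{A}\in\mathcal{V}$. (ii) Every $\mathbf{A}\in\mathcal{V}$ has a ternary term which is Mal'cev modulo $F_{\mathbf{A}}$ and $G_{\mathbf{A}}$. (iii) The free algebra $\mathbf{X}$ in $\mathcal{V}$ on $2$ generators has a ternary term which is Mal'cev modulo $F_{\mathbf{X}}$ and $G_{\mathbf{X}}$. (iv) In the free algebra $\mathbf{X}$ in $\mathcal{V}$ freely generated by $x,y$ there is a ternary term $t$ such that, with $S$ the smallest reflexive admissible relation on $\mathbf{X}$ containing $(x,y)$, we have $(x,t(x,y,y))\in F_{\mathbf{X}}(S)$ and $(t(x,x,y),y)\in G_{\mathbf{X}}(S)$. (v) For every $\mathbf{A}\in\mathcal{V}$ and every $R\in\mathrm{Adm}(\mathbf{A})$: $R\circ R\subseteq F_{\mathbf{A}}(R)\circ R\circ G_{\mathbf{A}}(R)$. (vi) In the free algebra $\mathbf{X}$ in $\mathcal{V}$ on $3$ generators, $R\circ R\subseteq F_{\mathbf{X}}(R)\circ R\circ G_{\mathbf{X}}(R)$ for every $R\in\mathrm{Adm}(\mathbf{X})$. (vii) In the free algebra $\mathbf{X}$ in $\mathcal{V}$ freely generated by $x,y,z$, with $S$ the smallest reflexive admissible relation on $\mathbf{X}$ containing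 both $(x,y)$ and $(y,z)$, we have $S\circ S\subseteq F_{\mathbf{X}}(S)\circ S\circ G_{\mathbf{X}}(S)$. (viii) For every $\mathbf{A}\in\mathcal{V}$ and every $R\in\mathrm{Adm}(\mathbf{A})$: $R\subseteq F_{\mathbf{A}}(R)\circ R^-\circ G_{\mathbf{A}}(R)$. (ix) In the free algebra $\mathbf{X}$ in $\mathcal{V}$ on $2$ generators, $R\subseteq F_{\mathbf{X}}(R)\circ R^-\circ G_{\mathbf{X}}(R)$ for every $R\in\mathrm{Adm}(\mathbf{X})$. (x) In the free algebra $\mathbf{X}$ in $\mathcal{V}$ freely generated by $x,y$, with $S$ the smallest reflexive admissible relation on $\mathbf{X}$ containing $(x,y)$, we have $S\subseteq F_{\mathbf{X}}(S)\circ S^-\circ G_{\mathbf{X}}(S)$.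
   Context: For an algebra $\mathbf{A}$, $\mathrm{Adm}(\mathbf{A})$ is the set of reflexive admissible (= compatible, i.e. closed under the basic operations coordinatewise) binary relations on $\mathbf{A}$. Given maps $F,G:\mathrm{Adm}(\mathbf{A})\to\mathrm{Adm}(\mathbf{A})$, a ternary term $t$ is Mal'cev modulo $F$ and $G$ if for all $a,b\in A$ and $R\in\mathrm{Adm}(\mathbf{A})$ with $aRb$: $(a,t(a,b,b))\in F(R)$ and $(t(a,a,b),b)\in G(R)$. A global operator $F$ on $\mathcal{V}$ for admissible and reflexive relations assigns to each $\mathbf{A}\in\mathcal{V}$ a map $F_{\mathbf{A}}:\mathrm{Adm}(\mathbf{A})\to\mathrm{Adm}(\mathbf{A})$. It is monotone if $R\subseteq S$ implies $F_{\mathbf{A}}(R)\subseteq F_{\mathbf{A}}(S)$. It has the homomorphism property if whenever $\mathbf{A},\mathbf{B}\in\mathcal{V}$, $\varphi:\mathbf{B}\to\mathbf{A}$ is a homomorphism and $R\in\mathrm{Adm}(\mathbf{B})$, then $\varphi(F_{\mathbf{B}}(R))\subseteq F_{\mathbf{A}}(\varphi(R))$, where for a relation $T$ on $\mathbf{B}$, $\varphi(T)$ denotes the smallest reflexive compatible relation on $\mathbf{A}$ containing $\{(\varphi(b),\varphi(c)):bTc\}$. Relational composition: $R\circ S=\{(a,c):\exists b\,(aRb\text{ and }bSc)\}$; $R^-$ is the converse of $R$. *)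

(* Defs.v *)
From mathcomp Require Import all_boot.
From Stdlib Require Import ClassicalEpsilon.

Set Implicit Arguments.
Unset Strict Implicit.
Unset Printing Implicit Defensive.

Record signature := Signature { sop : Type; sarity : sop -> nat }.

Inductive term (sg : signature) (X : Type) : Type :=
| Var : X -> term sg X
| App : forall o : sop sg, ('I_(sarity o) -> term sg X) -> term sg X.
Arguments Var {sg X} x.
Arguments App {sg X} o ts.

Record algebra (sg : signature) := Algebra {
  carrier :> Type;
  interp : forall o : sop sg, ('I_(sarity o) -> carrier) -> carrier }.
Arguments interp {sg} a o args : rename.

Fixpoint eval (sg : signature) (A : algebra sg) (X : Type) (e : X -> A)
  (t : term sg X) : A :=
  match t with
  | Var x => e x
  | App o ts => interp A o (fun i => eval e (ts i))
  end.

Fixpoint subst (sg : signature) (X Y : Type) (h : X -> term sg Y)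
  (t : term sg X) : term sg Y :=
  match t with
  | Var x => h x
  | App o ts => App o (fun i => subst h (ts i))
  end.

Definition env3 (T : Type) (a b c : T) : 'I_3 -> T :=
  fun i => if val i == 0 then a else if val i == 1 then b else c.

Definition app3 (sg : signature) (A : algebra sg) (t : term sg 'I_3)
  (a b c : A) : A := eval (env3 a b c) t.

(** * Varieties: given by a set of identities (Birkhoff) *)

Definition identities (sg : signature) := term sg nat -> term sg nat -> Prop.

Definition in_variety (sg : signature) (Sigma : identities sg) (A : algebra sg) :=
  forall s t, Sigma s t -> forall e : nat -> A, eval e s = eval e t.

Definition hom (sg : signature) (B A : algebra sg) (phi : B -> A) :=
  forall o (args : 'I_(sarity o) -> B),
    phi (interp B o args) = interp A o (fun i => phi (args i)).

Definition rel_ (T : Type) := T -> T -> Prop.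

Definition rsub (T : Type) (R S : rel_ T) := forall a b, R a b -> S a b.
Definition rcomp (T : Type) (R S : rel_ T) : rel_ T :=
  fun a c => exists b, R a b /\ S b c.
Definition rconv (T : Type) (R : rel_ T) : rel_ T := fun a b => R b a.

Definition compatible (sg : signature) (A : algebra sg) (R : rel_ A) :=
  forall o (a b : 'I_(sarity o) -> A),
    (forall i, R (a i) (b i)) -> R (interp A o a) (interp A o b).

Definition adm (sg : signature) (A : algebra sg) (R : rel_ A) :=
  (forall a, R a a) /\ compatible R.

Definition gen_adm (sg : signature) (A : algebra sg) (P : rel_ A) : rel_ A :=
  fun a b => forall R : rel_ A, adm R -> rsub P R -> R a b.

Definition rimage (S T : Type) (phi : S -> T) (R : rel_ S) : rel_ T :=
  fun a b => exists x y, R x y /\ a = phi x /\ b = phi y.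

Definition global_op (sg : signature) := forall A : algebra sg, rel_ A -> rel_ A.

Definition is_global_op (sg : signature) (Sigma : identities sg) (F : global_op sg) :=
  forall A : algebra sg, in_variety Sigma A ->
    forall R : rel_ A, adm R -> adm (F A R).

Definition monotone_op (sg : signature) (Sigma : identities sg) (F : global_op sg) :=
  forall A : algebra sg, in_variety Sigma A ->
    forall R S : rel_ A, adm R -> adm S -> rsub R S -> rsub (F A R) (F A S).

Definition hom_property (sg : signature) (Sigma : identities sg) (F : global_op sg) :=
  forall (A B : algebra sg), in_variety Sigma A -> in_variety Sigma B ->
    forall phi : B -> A, hom phi ->
    forall R : rel_ B, adm R ->
      rsub (gen_adm (rimage phi (F B R))) (F A (gen_adm (rimage phi R))).

Definition malcev_mod (sg : signature) (A : algebra sg) (F G : rel_ A -> rel_ A)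
  (t : term sg 'I_3) :=
  forall (a b : A) (R : rel_ A), adm R -> R a b ->
    F R a (app3 t a b b) /\ G R (app3 t a a b) b.

Inductive deriv (sg : signature) (Sigma : identities sg) (X : Type) :
    term sg X -> term sg X -> Prop :=
| d_refl t : deriv Sigma t t
| d_sym s t : deriv Sigma s t -> deriv Sigma t s
| d_trans s t u : deriv Sigma s t -> deriv Sigma t u -> deriv Sigma s u
| d_cong o (ss ts : 'I_(sarity o) -> term sg X) :
    (forall i, deriv Sigma (ss i) (ts i)) -> deriv Sigma (App o ss) (App o ts)
| d_ax s t (h : nat -> term sg X) :
    Sigma s t -> deriv Sigma (subst h s) (subst h t).

Section Free.
Variables (sg : signature) (Sigma : identities sg) (X : Type).

(** equivalence classes of terms *)
Definition fcarrier : Type :=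
  {P : term sg X -> Prop | exists t, P = deriv Sigma t}.

Definition fclass (t : term sg X) : fcarrier :=
  exist _ (deriv Sigma t) (ex_intro _ t erefl).

Definition frep (p : fcarrier) : term sg X :=
  proj1_sig (constructive_indefinite_description _ (proj2_sig p)).

Definition free_alg : algebra sg :=
  @Algebra sg fcarrier (fun o args => fclass (App o (fun i => frep (args i)))).

Definition free_gen (x : X) : free_alg := fclass (Var x).

End Free.

Definition Free (sg : signature) (Sigma : identities sg) (n : nat) : algebra sg :=
  @free_alg sg Sigma 'I_n.
Definition gen (sg : signature) (Sigma : identities sg) (n : nat) (i : 'I_n) :
  Free Sigma n := @free_gen sg Sigma 'I_n i.

(* Main.v *)
Require Import Defs.
From mathcomp Require Import all_boot.
From Stdlib Require Import FunctionalExtensionality PropExtensionality ProofIrrelevance ClassicalEpsilon.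

Set Implicit Arguments.
Unset Strict Implicit.
Unset Printing Implicit Defensive.

Section Gen.
Variable sg : signature.

Lemma eval_ext (A : algebra sg) X (e1 e2 : X -> A) (t : term sg X) :
  (forall x, e1 x = e2 x) -> eval e1 t = eval e2 t.
Proof.
move=> H; elim: t => [x|o ts IH] /=; first exact: H.
congr (interp A o); apply: functional_extensionality => i; exact: IH.
Qed.

Lemma eval_subst (A : algebra sg) X Y (e : Y -> A) (h : X -> term sg Y) t :
  eval e (subst h t) = eval (fun x => eval e (h x)) t.
Proof.
elim: t => [x|o ts IH] //=.
congr (interp A o); apply: functional_extensionality => i; exact: IH.
Qed.

Lemma hom_eval (A B : algebra sg) (phi : B -> A) X (e : X -> B) t :
  hom phi -> phi (eval e t) = eval (fun x => phi (e x)) t.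
Proof.
move=> hp; elim: t => [x|o ts IH] //=.
rewrite hp; congr (interp A o); apply: functional_extensionality => i; exact: IH.
Qed.

Lemma adm_eval (A : algebra sg) (R : rel_ A) X (e1 e2 : X -> A) t :
  adm R -> (forall x, R (e1 x) (e2 x)) -> R (eval e1 t) (eval e2 t).
Proof.
move=> [_ HR] H; elim: t => [x|o ts IH] /=; first exact: H.
by apply: HR.
Qed.

Lemma subst_var X (t : term sg X) : subst Var t = t.
Proof.
elim: t => [x|o ts IH] //=; congr (App o); apply: functional_extensionality => i; exact: IH.
Qed.

Lemma gen_adm_adm (A : algebra sg) (P : rel_ A) : adm (gen_adm P).
Proof.
split; first by move=> a R [Hr _] _; apply: Hr.
move=> o a b H R HR HP; apply: HR.2 => i; exact: H.
Qed.

Lemma gen_adm_min (A : algebra sg) (P R : rel_ A) : adm R -> rsub P R -> rsub (gen_adm P) R.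
Proof. by move=> HR HP a b H; apply: H. Qed.

Lemma gen_adm_gen (A : algebra sg) (P : rel_ A) a b : P a b -> gen_adm P a b.
Proof. by move=> H R _ HP; apply: HP. Qed.

Lemma preimage_adm (A B : algebra sg) (phi : B -> A) (R : rel_ A) :
  hom phi -> adm R -> adm (fun u v => R (phi u) (phi v)).
Proof.
move=> hp [Hr HR]; split; first by move=> a; apply: Hr.
move=> o a b H; rewrite !hp; exact: HR.
Qed.

Variable Sigma : identities sg.

Lemma sig_eq_lem X (P Q : term sg X -> Prop) (h1 : exists t, P = deriv Sigma t)
  (h2 : exists t, Q = deriv Sigma t) : P = Q ->
  exist (fun P => exists t, P = deriv Sigma t) P h1 = exist _ Q h2.
Proof. move=> E; subst; f_equal; apply: proof_irrelevance. Qed.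

Lemma fclass_eq X (s t : term sg X) : deriv Sigma s t -> fclass Sigma s = fclass Sigma t.
Proof.
move=> H; apply: sig_eq_lem; apply: functional_extensionality => u.
apply: propositional_extensionality; split => H'.
- apply: d_trans H'; exact: d_sym.
- exact: d_trans H'.
Qed.

Lemma frep_spec X (p : fcarrier Sigma X) : proj1_sig p = deriv Sigma (frep p).
Proof.
rewrite /frep; exact: (proj2_sig (constructive_indefinite_description _ (proj2_sig p))).
Qed.

Lemma fclass_frep X (p : fcarrier Sigma X) : fclass Sigma (frep p) = p.
Proof.
have E := frep_spec p; case: p E => P HP /= E.
by apply: sig_eq_lem.
Qed.

Lemma frep_deriv X (t : term sg X) : deriv Sigma t (frep (fclass Sigma t)).
Proof.
have E := frep_spec (fclass Sigma t).
have H := f_equal (fun P => P (frep (fclass Sigma t))) E; simpl in H.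
rewrite H; exact: d_refl.
Qed.

Lemma eval_free X Y (h : Y -> term sg X) t :
  eval (A := free_alg Sigma X) (fun y => fclass Sigma (h y)) t = fclass Sigma (subst h t).
Proof.
elim: t => [x|o ts IH] //=.
have -> : (fun i => frep (eval (A := free_alg Sigma X) (fun y => fclass Sigma (h y)) (ts i)))
   = (fun i => frep (fclass Sigma (subst h (ts i)))).
  by apply: functional_extensionality => i; rewrite IH.
apply: fclass_eq; apply: d_cong => i; apply: d_sym; exact: frep_deriv.
Qed.

Lemma eval_gen X (t : term sg X) :
  eval (A := free_alg Sigma X) (fun x => fclass Sigma (Var x)) t = fclass Sigma t.
Proof. by rewrite eval_free subst_var. Qed.

Lemma in_variety_free X : in_variety Sigma (free_alg Sigma X).
Proof.
move=> s t H e.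
rewrite (eval_ext (A := free_alg Sigma X) (e2 := fun k => fclass Sigma (frep (e k)))); last by move=> k; rewrite fclass_frep.
rewrite [RHS](eval_ext (A := free_alg Sigma X) (e2 := fun k => fclass Sigma (frep (e k)))); last by move=> k; rewrite fclass_frep.
rewrite !eval_free; apply: fclass_eq; exact: d_ax.
Qed.

Lemma deriv_eval (A : algebra sg) X (g : X -> A) s t :
  in_variety Sigma A -> deriv Sigma s t -> eval g s = eval g t.
Proof.
move=> hA; elim => {s t}.
- by [].
- by move=> s t _ ->.
- by move=> s t u _ -> _ ->.
- move=> o ss ts _ IH /=; congr (interp A o); apply: functional_extensionality => i; exact: IH.
- by move=> s t h H; rewrite !eval_subst; apply: hA.
Qed.

Definition univ (A : algebra sg) X (g : X -> A) (p : free_alg Sigma X) : A := eval g (frep p).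

Lemma univ_class (A : algebra sg) X (g : X -> A) t :
  in_variety Sigma A -> univ g (fclass Sigma t) = eval g t.
Proof. move=> hA; rewrite /univ; symmetry; apply: deriv_eval hA _; exact: frep_deriv. Qed.

Lemma univ_hom (A : algebra sg) X (g : X -> A) :
  in_variety Sigma A -> hom (univ g).
Proof. by move=> hA o args; rewrite /= univ_class. Qed.

Lemma transfer (F : global_op sg) (mF : monotone_op Sigma F) (pF : hom_property Sigma F)
  (A B : algebra sg) (hA : in_variety Sigma A) (hB : in_variety Sigma B)
  (phi : B -> A) (hp : hom phi) (R : rel_ B) (R' : rel_ A) (HR : adm R) (HR' : adm R')
  (H : forall u v, R u v -> R' (phi u) (phi v)) u v :
  F B R u v -> F A R' (phi u) (phi v).
Proof.
move=> Hf.
apply: (mF A hA (gen_adm (rimage phi R)) R' (gen_adm_adm _) HR').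
  apply: gen_adm_min HR' _ => a b [x [y [Hxy [-> ->]]]]; exact: H.
apply: (pF A B hA hB phi hp R HR); apply: gen_adm_gen; by exists u, v.
Qed.

End Gen.

Unset Implicit Arguments.
Section Main.
Variables (sg : signature) (Sigma : identities sg) (F G : global_op sg).
Hypotheses (mF : monotone_op Sigma F) (mG : monotone_op Sigma G)
  (pF : hom_property Sigma F) (pG : hom_property Sigma G).

Local Notation o0 := (@Ordinal 3 0 isT).
Local Notation o1 := (@Ordinal 3 1 isT).
Local Notation o2 := (@Ordinal 3 2 isT).
Local Notation x2 := (gen Sigma (@Ordinal 2 0 isT)).
Local Notation y2 := (gen Sigma (@Ordinal 2 1 isT)).
Local Notation S2 := (@gen_adm sg (Free Sigma 2) (fun a b => a = x2 /\ b = y2)).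
Local Notation x3 := (gen Sigma o0).
Local Notation y3 := (gen Sigma o1).
Local Notation z3 := (gen Sigma o2).
Local Notation S3 := (@gen_adm sg (Free Sigma 3)
   (fun a b => (a = x3 /\ b = y3) \/ (a = y3 /\ b = z3))).

Definition IV := exists t : term sg 'I_3,
  F (Free Sigma 2) S2 x2 (app3 t x2 y2 y2) /\ G (Free Sigma 2) S2 (app3 t x2 x2 y2) y2.

Lemma app3_hom (A B : algebra sg) (phi : B -> A) t c1 c2 c3 : hom phi ->
  phi (app3 t c1 c2 c3) = app3 t (phi c1) (phi c2) (phi c3).
Proof.
move=> hp; rewrite /app3 hom_eval //; apply: eval_ext => i.
by rewrite /env3; case: (val i == 0); case: (val i == 1).
Qed.

Lemma iv_i : IV -> exists t, forall A, in_variety Sigma A -> malcev_mod (F A) (G A) t.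
Proof.
move=> [t [H1 H2]]; exists t => A hA a b R HR Rab.
pose g := fun i : 'I_2 => if val i == 0 then a else b.
have hp := univ_hom g hA.
have ex : univ g x2 = a by rewrite /gen /free_gen univ_class.
have ey : univ g y2 = b by rewrite /gen /free_gen univ_class.
have HS : forall u v, S2 u v -> R (univ g u) (univ g v).
  apply: (gen_adm_min (preimage_adm hp HR)) => u v [-> ->]; by rewrite ex ey.
have hX := @in_variety_free sg Sigma 'I_2.
split.
- have := transfer mF pF hA hX hp (gen_adm_adm _) HR HS H1.
  by rewrite app3_hom // ex ey.
- have := transfer mG pG hA hX hp (gen_adm_adm _) HR HS H2.
  by rewrite app3_hom // ex ey.
Qed.

Lemma app3_adm (A : algebra sg) (R : rel_ A) t a1 a2 a3 b1 b2 b3 : adm R ->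
  R a1 b1 -> R a2 b2 -> R a3 b3 -> R (app3 t a1 a2 a3) (app3 t b1 b2 b3).
Proof.
move=> HR h1 h2 h3; apply: adm_eval HR _ => i.
by rewrite /env3; case: (val i == 0); case: (val i == 1).
Qed.

Lemma i_v t : (forall A, in_variety Sigma A -> malcev_mod (F A) (G A) t) ->
  forall A : algebra sg, in_variety Sigma A -> forall R : rel_ A, adm R ->
      rsub (rcomp R R) (rcomp (F A R) (rcomp R (G A R))).
Proof.
move=> Ht A hA R HR a c [b [Rab Rbc]].
exists (app3 t a b b); split; first exact: (Ht A hA a b R HR Rab).1.
exists (app3 t b b c); split; last exact: (Ht A hA b c R HR Rbc).2.
by apply: app3_adm => //; apply: HR.1.
Qed.

Lemma i_viii t : (forall A, in_variety Sigma A -> malcev_mod (F A) (G A) t) ->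
  forall A : algebra sg, in_variety Sigma A -> forall R : rel_ A, adm R ->
      rsub R (rcomp (F A R) (rcomp (rconv R) (G A R))).
Proof.
move=> Ht A hA R HR a b Rab.
exists (app3 t a b b); split; first exact: (Ht A hA a b R HR Rab).1.
exists (app3 t a a b); split; last exact: (Ht A hA a b R HR Rab).2.
by rewrite /rconv; apply: app3_adm => //; apply: HR.1.
Qed.

Lemma x_iv : rsub S2 (rcomp (F _ S2) (rcomp (rconv S2) (G _ S2))) -> IV.
Proof.
move=> H.
pose T := fun u v : Free Sigma 2 => exists r : term sg 'I_3,
   u = app3 r x2 x2 y2 /\ v = app3 r y2 x2 y2.
have hT : adm T.
  split.
  - move=> a; exists (subst (fun i : 'I_2 => Var (if val i == 0 then o1 else o2)) (frep a)).
    have Ea : a = @eval sg (Free Sigma _) _ (fun x => fclass Sigma (Var x)) (frep a) by rewrite eval_gen fclass_frep.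
    rewrite /app3 !eval_subst.
    split; rewrite [LHS]Ea; apply: eval_ext => -[[|[|m]] Hi] //=; by rewrite /gen /free_gen; congr fclass; congr Var; apply: val_inj.
  - move=> o a b Hab.
    pose rs := fun i => proj1_sig (constructive_indefinite_description _ (Hab i)).
    have Hrs := fun i => proj2_sig (constructive_indefinite_description _ (Hab i)).
    exists (App o rs); split.
    + have -> : a = (fun i => app3 (rs i) x2 x2 y2) by apply: functional_extensionality => i; case: (Hrs i).
      reflexivity.
    + have -> : b = (fun i => app3 (rs i) y2 x2 y2) by apply: functional_extensionality => i; case: (Hrs i).
      reflexivity.
have ST : rsub S2 T.
  apply: gen_adm_min hT _ => a b [-> ->]; by exists (Var o0).
have [u [Fu [v [Svu Gv]]]] := H _ _ (gen_adm_gen (conj erefl erefl)).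
have [r [ev eu]] := ST _ _ Svu.
exists (subst (env3 (Var o1) (Var o0) (Var o2)) r).
have E : forall a b c, app3 (subst (env3 (Var o1) (Var o0) (Var o2)) r) a b c
   = app3 r b a c :> Free Sigma 2.
  move=> a b c; rewrite /app3 eval_subst; apply: eval_ext => -[[|[|[|]]] Hi] //.
by rewrite !E -eu -ev.
Qed.

Lemma vii_iv : rsub (rcomp S3 S3) (rcomp (F _ S3) (rcomp S3 (G _ S3))) -> IV.
Proof.
move=> H.
pose e1 := fun k : nat => match k with 0 => x3 | 1 => y3 | 2 => x3 | 3 => y3 | _ => z3 end.
pose e2 := fun k : nat => match k with 0 => y3 | 1 => z3 | 2 => x3 | 3 => y3 | _ => z3 end.
pose T := fun u v : Free Sigma 3 => exists r : term sg nat,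
   u = eval e1 r /\ v = eval e2 r.
have hT : adm T.
  split.
  - move=> a; exists (subst (fun i : 'I_3 => Var (val i + 2)) (frep a)).
    have Ea : a = @eval sg (Free Sigma _) _ (fun x => fclass Sigma (Var x)) (frep a) by rewrite eval_gen fclass_frep.
    rewrite !eval_subst.
    split; rewrite [LHS]Ea; apply: eval_ext => -[[|[|[|m]]] Hi] //=; by rewrite /gen /free_gen; congr fclass; congr Var; apply: val_inj.
  - move=> o a b Hab.
    pose rs := fun i => proj1_sig (constructive_indefinite_description _ (Hab i)).
    have Hrs := fun i => proj2_sig (constructive_indefinite_description _ (Hab i)).
    exists (App o rs); split.
    + have -> : a = (fun i => eval e1 (rs i)) by apply: functional_extensionality => i; case: (Hrs i).
      reflexivity.
    + have -> : b = (fun i => eval e2 (rs i)) by apply: functional_extensionality => i; case: (Hrs i).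
      reflexivity.
have ST : rsub S3 T.
  apply: gen_adm_min hT _ => a b [[-> ->]|[-> ->]]; [by exists (Var 0) | by exists (Var 1)].
have [d [Fd [e [Sde Ge]]]] := H x3 z3 (ex_intro _ y3
   (conj (gen_adm_gen (or_introl (conj erefl erefl))) (gen_adm_gen (or_intror (conj erefl erefl))))).
have [r [ed ee]] := ST _ _ Sde.
pose h := fun k : nat => @Var sg _ (match k with 0 => o0 | 1 => o2 | 2 => o0 | 3 => o1 | _ => o2 end).
exists (subst h r).
have hX2 := @in_variety_free sg Sigma 'I_2.
have hX3 := @in_variety_free sg Sigma 'I_3.
split.
- pose g := fun i : 'I_3 => if val i == 0 then x2 else y2.
  have hp := univ_hom g hX2.
  have ex : univ g x3 = x2 by rewrite /gen /free_gen univ_class.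
  have ey : univ g y3 = y2 by rewrite /gen /free_gen univ_class.
  have ez : univ g z3 = y2 by rewrite /gen /free_gen univ_class.
  have HS : forall u v, S3 u v -> S2 (univ g u) (univ g v).
    apply: (gen_adm_min (preimage_adm hp (gen_adm_adm _))) => u v [[-> ->]|[-> ->]].
    + by rewrite ex ey; apply: gen_adm_gen.
    + by rewrite ey ez; apply: (gen_adm_adm _).1.
  have := transfer mF pF hX2 hX3 hp (gen_adm_adm _) (gen_adm_adm _) HS Fd.
  rewrite ex ed hom_eval // /app3 eval_subst.
  by congr (F _ _ _); apply: eval_ext => -[|[|[|[|k]]]] /=; rewrite ?ex ?ey ?ez.
- pose g := fun i : 'I_3 => if val i == 2 then y2 else x2.
  have hp := univ_hom g hX2.
  have ex : univ g x3 = x2 by rewrite /gen /free_gen univ_class.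
  have ey : univ g y3 = x2 by rewrite /gen /free_gen univ_class.
  have ez : univ g z3 = y2 by rewrite /gen /free_gen univ_class.
  have HS : forall u v, S3 u v -> S2 (univ g u) (univ g v).
    apply: (gen_adm_min (preimage_adm hp (gen_adm_adm _))) => u v [[-> ->]|[-> ->]].
    + by rewrite ex ey; apply: (gen_adm_adm _).1.
    + by rewrite ey ez; apply: gen_adm_gen.
  have := transfer mG pG hX2 hX3 hp (gen_adm_adm _) (gen_adm_adm _) HS Ge.
  rewrite ez ee hom_eval // /app3 eval_subst.
  by congr (G _ _ _ _); apply: eval_ext => -[|[|[|[|k]]]] /=; rewrite ?ex ?ey ?ez.
Qed.

End Main.

Theorem theorem3 (sg : signature) (Sigma : identities sg) (F G : global_op sg)
  (hF : is_global_op Sigma F) (hG : is_global_op Sigma G)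
  (mF : monotone_op Sigma F) (mG : monotone_op Sigma G)
  (pF : hom_property Sigma F) (pG : hom_property Sigma G) :
  [<->
   (* (i) *)
   (exists t : term sg 'I_3, forall A : algebra sg, in_variety Sigma A ->
      malcev_mod (F A) (G A) t);
   (* (ii) *)
   (forall A : algebra sg, in_variety Sigma A ->
      exists t : term sg 'I_3, malcev_mod (F A) (G A) t);
   (* (iii) *)
   (exists t : term sg 'I_3, malcev_mod (F (Free Sigma 2)) (G (Free Sigma 2)) t);
   (* (iv) *)
   (let x := gen Sigma (@Ordinal 2 0 isT) in
    let y := gen Sigma (@Ordinal 2 1 isT) in
    let S := gen_adm (fun a b => a = x /\ b = y) in
    exists t : term sg 'I_3,
      F (Free Sigma 2) S x (app3 t x y y) /\ G (Free Sigma 2) S (app3 t x x y) y);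
   (* (v) *)
   (forall A : algebra sg, in_variety Sigma A -> forall R : rel_ A, adm R ->
      rsub (rcomp R R) (rcomp (F A R) (rcomp R (G A R))));
   (* (vi) *)
   (forall R : rel_ (Free Sigma 3), adm R ->
      rsub (rcomp R R) (rcomp (F _ R) (rcomp R (G _ R))));
   (* (vii) *)
   (let x := gen Sigma (@Ordinal 3 0 isT) in
    let y := gen Sigma (@Ordinal 3 1 isT) in
    let z := gen Sigma (@Ordinal 3 2 isT) in
    let S := gen_adm (fun a b => (a = x /\ b = y) \/ (a = y /\ b = z)) in
    rsub (rcomp S S) (rcomp (F _ S) (rcomp S (G _ S))));
   (* (viii) *)
   (forall A : algebra sg, in_variety Sigma A -> forall R : rel_ A, adm R ->
      rsub R (rcomp (F A R) (rcomp (rconv R) (G A R))));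
   (* (ix) *)
   (forall R : rel_ (Free Sigma 2), adm R ->
      rsub R (rcomp (F _ R) (rcomp (rconv R) (G _ R))));
   (* (x) *)
   (let x := gen Sigma (@Ordinal 2 0 isT) in
    let y := gen Sigma (@Ordinal 2 1 isT) in
    let S := gen_adm (fun a b => a = x /\ b = y) in
    rsub S (rcomp (F _ S) (rcomp (rconv S) (G _ S))))
  ].
Proof.
have hX2 := @in_variety_free sg Sigma 'I_2.
have hX3 := @in_variety_free sg Sigma 'I_3.
have Kiv := @iv_i sg Sigma F G mF mG pF pG.
tfae.
- move=> [t Ht] A hA; exists t; exact: Ht.
- move=> H; exact: H _ hX2.
- move=> [t Ht] x y S; exists t; apply: Ht; [exact: gen_adm_adm | exact: gen_adm_gen].
- move=> H; have [t Ht] := Kiv H; exact: (@i_v sg Sigma F G t Ht).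
- move=> H; exact: H _ hX3.
- move=> H x y z S; apply: H; exact: gen_adm_adm.
- move=> H; have [t Ht] := Kiv (@vii_iv sg Sigma F G mF mG pF pG H); exact: (@i_viii sg Sigma F G t Ht).
- move=> H; exact: H _ hX2.
- move=> H x y S; apply: H; exact: gen_adm_adm.
- move=> H; exact: Kiv (@x_iv sg Sigma F G H).
Qed.
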